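(* Let $$A=\begin{pmatrix}1&1&2&2\\1&0&1&2\\2&1&0&1\\2&2&1&1\end{pmatrix}.$$ Then $\operatorname{rk}(A)=\operatorname{rk}_+(A)=3$ and $\operatorname{st}_+(A)=4$.
   Context: The SNT-rank $\operatorname{st}_+(A)$ of a symmetric entrywise nonnegative $n\times n$ matrix $A$ is the minimal $k$ such that $A=BCB^T$ with $B$ an entrywise nonnegative $n\times k$ matrix and $C$ a symmetric entrywise nonnegative $k\times k$ matrix. $\operatorname{rk}_+(A)$ is the minimal $k$ such that $A=UV^T$ with $U,V$ entrywise nonnegative $n\times k$ matrices. *)

(* Defs.v *)
From HB Require Import structures.
From mathcomp Require Import all_boot all_order all_algebra.
From mathcomp Require Import reals.
Set Implicit Arguments. Unset Strict Implicit. Unset Printing Implicit Defensive.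
Import Order.TTheory GRing.Theory Num.Theory.
Local Open Scope ring_scope.

Definition nonneg_mx (R : realType) m n (M : 'M[R]_(m, n)) : Prop :=
  forall i j, 0 <= M i j.

Definition has_nn_fact (R : realType) n (A : 'M[R]_n) (k : nat) : Prop :=
  exists U V : 'M[R]_(n, k), nonneg_mx U /\ nonneg_mx V /\ A = U *m V^T.

Definition has_snt_fact (R : realType) n (A : 'M[R]_n) (k : nat) : Prop :=
  exists (B : 'M[R]_(n, k)) (C : 'M[R]_k),
    nonneg_mx B /\ nonneg_mx C /\ C^T = C /\ A = B *m C *m B^T.

Definition nn_rank_is (R : realType) n (A : 'M[R]_n) (r : nat) : Prop :=
  has_nn_fact A r /\ forall k, (k < r)%N -> ~ has_nn_fact A k.

Definition snt_rank_is (R : realType) n (A : 'M[R]_n) (r : nat) : Prop :=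
  has_snt_fact A r /\ forall k, (k < r)%N -> ~ has_snt_fact A k.

Definition A7 (R : realType) : 'M[R]_4 :=
  \matrix_(i < 4, j < 4)
    (nth 0%N (nth [::] [:: [:: 1; 1; 2; 2];
                           [:: 1; 0; 1; 2];
                           [:: 2; 1; 0; 1];
                           [:: 2; 2; 1; 1]]%N i) j)%:R.

(* Main.v *)
Require Import Defs.
From HB Require Import structures.
From mathcomp Require Import all_boot all_order all_algebra.
From mathcomp Require Import reals ring lra.
Import Order.TTheory GRing.Theory Num.Theory.
Set Implicit Arguments. Unset Strict Implicit.
Local Open Scope ring_scope.

Definition bil (R : realType) (c00 c01 c02 c11 c12 c22 u0 u1 u2 v0 v1 v2 : R) :=
  u0 * (c00 * v0 + c01 * v1 + c02 * v2) + u1 * (c01 * v0 + c11 * v1 + c12 * v2)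
  + u2 * (c02 * v0 + c12 * v1 + c22 * v2).

Definition det3s (R : realType) (c00 c01 c02 c11 c12 c22 : R) :=
  c00 * (c11 * c22 - c12 * c12) - c01 * (c01 * c22 - c12 * c02) + c02 * (c01 * c12 - c11 * c02).

Lemma supp (R : realType) (c00 c01 c02 c11 c12 c22 p0 p1 p2 : R) :
  0 <= c00 -> 0 <= c01 -> 0 <= c02 -> 0 <= c11 -> 0 <= c12 -> 0 <= c22 ->
  0 <= p0 -> 0 <= p1 -> 0 <= p2 ->
  det3s c00 c01 c02 c11 c12 c22 != 0 ->
  bil c00 c01 c02 c11 c12 c22 p0 p1 p2 p0 p1 p2 = 0 ->
  ~ (p0 = 0 /\ p1 = 0 /\ p2 = 0) ->
  [\/ p1 = 0 /\ p2 = 0 /\ c00 = 0,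
      p0 = 0 /\ p2 = 0 /\ c11 = 0 |
      p0 = 0 /\ p1 = 0 /\ c22 = 0].
Proof.
move=> q00 q01 q02 q11 q12 q22 r0 r1 r2 hD hB hnz.
have g00 : 0 <= p0 * p0 * c00 by rewrite !mulr_ge0.
have g11 : 0 <= p1 * p1 * c11 by rewrite !mulr_ge0.
have g22 : 0 <= p2 * p2 * c22 by rewrite !mulr_ge0.
have g01 : 0 <= p0 * p1 * c01 by rewrite !mulr_ge0.
have g02 : 0 <= p0 * p2 * c02 by rewrite !mulr_ge0.
have g12 : 0 <= p1 * p2 * c12 by rewrite !mulr_ge0.
have hB' : p0 * p0 * c00 + p1 * p1 * c11 + p2 * p2 * c22 + 2 * (p0 * p1 * c01) + 2 * (p0 * p2 * c02)
   + 2 * (p1 * p2 * c12) = 0 by rewrite -[RHS]hB /bil; ring.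
have z00 : p0 * p0 * c00 = 0 by lra.
have z11 : p1 * p1 * c11 = 0 by lra.
have z22 : p2 * p2 * c22 = 0 by lra.
have z01 : p0 * p1 * c01 = 0 by lra.
have z02 : p0 * p2 * c02 = 0 by lra.
have z12 : p1 * p2 * c12 = 0 by lra.
have mz : forall a b c : R, a != 0 -> b != 0 -> a * b * c = 0 -> c = 0.
  by move=> a b c ha hb /eqP; rewrite !mulf_eq0 (negbTE ha) (negbTE hb) => /eqP.
have [h0|h0] := eqVneq p0 0.
- have [h1|h1] := eqVneq p1 0.
  + have [h2|h2] := eqVneq p2 0; first by exfalso; apply: hnz.
    by constructor 3; split => //; split => //; exact: (mz _ _ _ h2 h2 z22).
  + have e11 := mz _ _ _ h1 h1 z11.
    have [h2|h2] := eqVneq p2 0; first by constructor 2.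
    have e22 := mz _ _ _ h2 h2 z22; have e12 := mz _ _ _ h1 h2 z12.
    by exfalso; move/eqP: hD; apply; rewrite /det3s e11 e22 e12; ring.
- have e00 := mz _ _ _ h0 h0 z00.
  have [h1|h1] := eqVneq p1 0.
  + have [h2|h2] := eqVneq p2 0; first by constructor 1.
    have e22 := mz _ _ _ h2 h2 z22; have e02 := mz _ _ _ h0 h2 z02.
    by exfalso; move/eqP: hD; apply; rewrite /det3s e00 e22 e02; ring.
  + have e11 := mz _ _ _ h1 h1 z11; have e01 := mz _ _ _ h0 h1 z01.
    by exfalso; move/eqP: hD; apply; rewrite /det3s e00 e11 e01; ring.
Qed.

Lemma fin (R : realType) (s t s' t' P Q X : R) :
  0 <= s -> 0 <= t -> 0 <= s' -> 0 <= t' -> 0 <= P -> 0 <= Q ->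
  t <= 1 -> s <= 2 -> t' <= 2 -> s' <= 1 ->
  P + 2*s + 4*t - 2*s*t = 1 ->
  Q + 4*s' + 2*t' - 2*s'*t' = 1 ->
  2*s + s' + t + 2*t' - t*s' - s*t' + X = 2 ->
  2 * X <= P + Q -> False.
Proof.
move=> s0 t0 s'0 t'0 P0 Q0 t1 s2 t'2 s'1 HP HQ HX HXPQ.
have hs : s <= 1/2 by nra.
have ht : 3 * t <= 1 by nra.
have hs' : s' <= 1/4 by nra.
have ht' : 2 * t' <= 1 by nra.
nra.
Qed.

Lemma core (R : realType) (al be xp xq xr yp yq yr a b c d : R) :
  0 <= al -> 0 <= be -> 0 <= xp -> 0 <= xq -> 0 <= xr ->
  0 <= yp -> 0 <= yq -> 0 <= yr -> 0 <= a -> 0 <= b -> 0 <= c -> 0 <= d ->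
  al*be*a = 1 ->
  al*(a*xq + b*xr) = 1 -> be*(a*xp + c*xr) = 2 ->
  al*(a*yq + b*yr) = 2 -> be*(a*yp + c*yr) = 1 ->
  2*a*xp*xq + 2*b*xp*xr + 2*c*xq*xr + d*xr^+2 = 1 ->
  2*a*yp*yq + 2*b*yp*yr + 2*c*yq*yr + d*yr^+2 = 1 ->
  a*(xp*yq+xq*yp) + b*(xp*yr+xr*yp) + c*(xq*yr+xr*yq) + d*xr*yr = 2 -> False.
Proof.
move=> ? ? ? ? ? ? ? ? ? ? ? ? Hab H1 H2 H3 H4 Qx Qy Bxy.
pose s := be*a*xp; pose t := al*a*xq; pose s' := be*a*yp; pose t' := al*a*yq.
have u1 : al*b*xr = 1 - t by rewrite /t; lra.
have u2 : be*c*xr = 2 - s by rewrite /s; lra.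
have v1 : al*b*yr = 2 - t' by rewrite /t'; lra.
have v2 : be*c*yr = 1 - s' by rewrite /s'; lra.
have K : forall z, z = z * (al*be*a) by move=> z; rewrite Hab mulr1.
have i1 : a*xp*xq = s*t by rewrite /s /t [LHS]K; ring.
have i2 : b*xp*xr = s*(1-t) by rewrite -u1 /s [LHS]K; ring.
have i3 : c*xq*xr = t*(2-s) by rewrite -u2 /t [LHS]K; ring.
have j1 : a*yp*yq = s'*t' by rewrite /s' /t' [LHS]K; ring.
have j2 : b*yp*yr = s'*(2-t') by rewrite -v1 /s' [LHS]K; ring.
have j3 : c*yq*yr = t'*(1-s') by rewrite -v2 /t' [LHS]K; ring.
have k1 : a*(xp*yq+xq*yp) = s*t' + t*s' by rewrite /s /t /s' /t' [LHS]K; ring.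
have k2 : b*(xp*yr+xr*yp) = s*(2-t') + s'*(1-t)
  by rewrite -v1 -u1 /s /s' [LHS]K; ring.
have k3 : c*(xq*yr+xr*yq) = t*(1-s') + t'*(2-s)
  by rewrite -v2 -u2 /t /t' [LHS]K; ring.
have s0 : 0 <= s by rewrite /s; do 2 apply: mulr_ge0 => //.
have t0 : 0 <= t by rewrite /t; do 2 apply: mulr_ge0 => //.
have s'0 : 0 <= s' by rewrite /s'; do 2 apply: mulr_ge0 => //.
have t'0 : 0 <= t' by rewrite /t'; do 2 apply: mulr_ge0 => //.
have t1 : t <= 1 by rewrite -subr_ge0 -u1; do 2 apply: mulr_ge0 => //.
have s2 : s <= 2 by rewrite -subr_ge0 -u2; do 2 apply: mulr_ge0 => //.
have t'2 : t' <= 2 by rewrite -subr_ge0 -v1; do 2 apply: mulr_ge0 => //.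
have s'1 : s' <= 1 by rewrite -subr_ge0 -v2; do 2 apply: mulr_ge0 => //.
apply: (@fin R s t s' t' (d*xr^+2) (d*yr^+2) (d*xr*yr)) => //.
- by apply: mulr_ge0 => //; apply: sqr_ge0.
- by apply: mulr_ge0 => //; apply: sqr_ge0.
- rewrite -[RHS]Qx; have -> : 2*a*xp*xq + 2*b*xp*xr + 2*c*xq*xr + d*xr^+2 =
    2*(a*xp*xq) + 2*(b*xp*xr) + 2*(c*xq*xr) + d*xr^+2 by ring.
  by rewrite i1 i2 i3; ring.
- rewrite -[RHS]Qy; have -> : 2*a*yp*yq + 2*b*yp*yr + 2*c*yq*yr + d*yr^+2 =
    2*(a*yp*yq) + 2*(b*yp*yr) + 2*(c*yq*yr) + d*yr^+2 by ring.
  by rewrite j1 j2 j3; ring.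
- by rewrite -[RHS]Bxy k1 k2 k3; ring.
- have : 0 <= d * (xr - yr)^+2 by apply: mulr_ge0 => //; apply: sqr_ge0.
  nra.
Qed.

Ltac solve_eqs E00 E01 E02 E03 E12 E13 E23 E33 :=
  first [ by rewrite -[RHS]E00 /bil; ring | by rewrite -[RHS]E01 /bil; ring
        | by rewrite -[RHS]E02 /bil; ring | by rewrite -[RHS]E03 /bil; ring
        | by rewrite -[RHS]E12 /bil; ring | by rewrite -[RHS]E13 /bil; ring
        | by rewrite -[RHS]E23 /bil; ring | by rewrite -[RHS]E33 /bil; ring ].

Lemma snt3_scalar (R : realType) (c00 c01 c02 c11 c12 c22 x0 x1 x2 p0 p1 p2
   q0 q1 q2 y0 y1 y2 : R) :
  0 <= c00 -> 0 <= c01 -> 0 <= c02 -> 0 <= c11 -> 0 <= c12 -> 0 <= c22 ->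
  0 <= x0 -> 0 <= x1 -> 0 <= x2 -> 0 <= p0 -> 0 <= p1 -> 0 <= p2 ->
  0 <= q0 -> 0 <= q1 -> 0 <= q2 -> 0 <= y0 -> 0 <= y1 -> 0 <= y2 ->
  det3s c00 c01 c02 c11 c12 c22 != 0 ->
  bil c00 c01 c02 c11 c12 c22 x0 x1 x2 x0 x1 x2 = 1 ->
  bil c00 c01 c02 c11 c12 c22 x0 x1 x2 p0 p1 p2 = 1 ->
  bil c00 c01 c02 c11 c12 c22 x0 x1 x2 q0 q1 q2 = 2 ->
  bil c00 c01 c02 c11 c12 c22 x0 x1 x2 y0 y1 y2 = 2 ->
  bil c00 c01 c02 c11 c12 c22 p0 p1 p2 p0 p1 p2 = 0 ->
  bil c00 c01 c02 c11 c12 c22 p0 p1 p2 q0 q1 q2 = 1 ->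
  bil c00 c01 c02 c11 c12 c22 p0 p1 p2 y0 y1 y2 = 2 ->
  bil c00 c01 c02 c11 c12 c22 q0 q1 q2 q0 q1 q2 = 0 ->
  bil c00 c01 c02 c11 c12 c22 q0 q1 q2 y0 y1 y2 = 1 ->
  bil c00 c01 c02 c11 c12 c22 y0 y1 y2 y0 y1 y2 = 1 -> False.
Proof.
move=> n00 n01 n02 n11 n12 n22 nx0 nx1 nx2 np0 np1 np2 nq0 nq1 nq2 ny0 ny1 ny2
  hD E00 E01 E02 E03 E11 E12 E13 E22 E23 E33.
have hp : ~ (p0 = 0 /\ p1 = 0 /\ p2 = 0).
  case=> e0 [e1 e2]; have : (0:R) = 1 by rewrite -[RHS]E12 /bil e0 e1 e2; ring.
  by move/eqP; rewrite eq_sym oner_eq0.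
have hq : ~ (q0 = 0 /\ q1 = 0 /\ q2 = 0).
  case=> e0 [e1 e2]; have : (0:R) = 1 by rewrite -[RHS]E12 /bil e0 e1 e2; ring.
  by move/eqP; rewrite eq_sym oner_eq0.
have sp := supp n00 n01 n02 n11 n12 n22 np0 np1 np2 hD E11 hp.
have sq := supp n00 n01 n02 n11 n12 n22 nq0 nq1 nq2 hD E22 hq.
case: sp => [[e1 [e2 e3]]|[e1 [e2 e3]]|[e1 [e2 e3]]];
case: sq => [[f1 [f2 f3]]|[f1 [f2 f3]]|[f1 [f2 f3]]]; subst;
  try (have : (0:R) = 1 by rewrite -[RHS]E12 /bil; ring);
  try (by move/eqP; rewrite eq_sym oner_eq0).
- apply: (@core R p0 q1 x0 x1 x2 y0 y1 y2 c01 c02 c12 c22) => //;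
  solve_eqs E00 E01 E02 E03 E12 E13 E23 E33.
- apply: (@core R p0 q2 x0 x2 x1 y0 y2 y1 c02 c01 c12 c11) => //;
  solve_eqs E00 E01 E02 E03 E12 E13 E23 E33.
- apply: (@core R p1 q0 x1 x0 x2 y1 y0 y2 c01 c12 c02 c22) => //;
  solve_eqs E00 E01 E02 E03 E12 E13 E23 E33.
- apply: (@core R p1 q2 x1 x2 x0 y1 y2 y0 c12 c01 c02 c00) => //;
  solve_eqs E00 E01 E02 E03 E12 E13 E23 E33.
- apply: (@core R p2 q0 x2 x0 x1 y2 y0 y1 c02 c12 c01 c11) => //;
  solve_eqs E00 E01 E02 E03 E12 E13 E23 E33.
- apply: (@core R p2 q1 x2 x1 x0 y2 y1 y0 c12 c02 c01 c00) => //;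
  solve_eqs E00 E01 E02 E03 E12 E13 E23 E33.
Qed.


Lemma det3 (R : comNzRingType) (C : 'M[R]_3) : \det C =
  C 0 0 * (C 1 1 * C 2 2 - C 1 2 * C 2 1)
  - C 0 1 * (C 1 0 * C 2 2 - C 1 2 * C 2 0)
  + C 0 2 * (C 1 0 * C 2 1 - C 1 1 * C 2 0).
Proof.
have [f E] : exists f : nat -> nat -> R, forall i j, C i j = f i j.
  by exists (fun a b => C (inord a) (inord b)) => i j; rewrite !inord_val.
rewrite (expand_det_row _ 0) !big_ord_recr big_ord0 /= /cofactor.
rewrite !(expand_det_row _ 0) !big_ord_recr !big_ord0 /= /cofactor.
rewrite !det_mx11 !mxE !E /=.
ring.
Qed.

Lemma eq_via (R : realType) (a s k k' : R) : a = s -> k' = s -> k' = k -> a = k.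
Proof. by move=> -> -> . Qed.

Definition U7 (R : realType) : 'M[R]_(4,3) :=
  \matrix_(i < 4, j < 3)
    (nth 0%N (nth [::] [:: [:: 1; 0; 1]; [:: 1; 0; 0]; [:: 0; 1; 0]; [:: 0; 1; 1]]%N i) j)%:R.
Definition V7 (R : realType) : 'M[R]_(4,3) :=
  \matrix_(i < 4, j < 3)
    (nth 0%N (nth [::] [:: [:: 1; 2; 0]; [:: 0; 1; 1]; [:: 1; 0; 1]; [:: 2; 1; 0]]%N i) j)%:R.
Definition L7 (R : realType) : 'M[R]_(3,4) :=
  \matrix_(i < 3, j < 4) (i == j :> nat)%:R.
Definition M7 (R : realType) : 'M[R]_(4,3) :=
  \matrix_(i < 4, j < 3)
    (nth 0%Z (nth [::] [:: [:: -1; 2; 1]; [:: 2; -4; 1]; [:: 1; 1; -1]; [:: 0; 0; 0]]%Z i) j)%:~R.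

Lemma A7_UV (R : realType) : A7 R = U7 R *m (V7 R)^T.
Proof.
apply/matrixP => i j; rewrite !(mxE, big_ord_recr, big_ord0) /=.
case: i => [[|[|[|[|i]]]] hi] //; case: j => [[|[|[|[|j]]]] hj] //=; ring.
Qed.

Lemma A7_LM (R : realType) : L7 R *m A7 R *m M7 R = 3%:M.
Proof.
apply/matrixP => i j; rewrite !(mxE, big_ord_recr, big_ord0) /=.
case: i => [[|[|[|i]]] hi] //; case: j => [[|[|[|j]]] hj] //=; ring.
Qed.


Lemma rankA7 (R : realType) : \rank (A7 R) = 3%N.
Proof.
apply/eqP; rewrite eqn_leq; apply/andP; split.
  rewrite A7_UV; exact: leq_trans (mxrankM_maxl _ _) (rank_leq_col _).
have r3 : \rank (3%:M : 'M[R]_3) = 3%N.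
  by apply: mxrank_unit; rewrite unitmxE det_scalar unitfE expf_neq0 // pnatr_eq0.
rewrite -{1}r3 -(A7_LM R).
exact: leq_trans (mxrankM_maxl _ _) (mxrankM_maxr _ _).
Qed.

Lemma no_snt3 (R : realType) : ~ has_snt_fact (A7 R) 3.
Proof.
case=> B [C [nB [nC [sC E]]]].
have uC : \det C != 0.
  have h : (3 <= \rank C)%N.
    by rewrite -{1}(rankA7 R) E; exact: leq_trans (mxrankM_maxl _ _) (mxrankM_maxr _ _).
  have : row_free C by rewrite /row_free eqn_leq rank_leq_row.
  by rewrite row_free_unit unitmxE unitfE.
have [fB EB] : exists f : nat -> nat -> R, forall i j, B i j = f i j.
  by exists (fun a b => B (inord a) (inord b)) => i j; rewrite !inord_val.
have [fC EC] : exists f : nat -> nat -> R, forall i j, C i j = f i j.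
  by exists (fun a b => C (inord a) (inord b)) => i j; rewrite !inord_val.
have nfB : forall i j, (i < 4)%N -> (j < 3)%N -> 0 <= fB i j.
  by move=> i j hi hj; have := nB (Ordinal hi) (Ordinal hj); rewrite EB.
have nfC : forall i j, (i < 3)%N -> (j < 3)%N -> 0 <= fC i j.
  by move=> i j hi hj; have := nC (Ordinal hi) (Ordinal hj); rewrite EC.
have s10 : fC 1%N 0%N = fC 0%N 1%N.
  by have := congr1 (fun M : 'M[R]_3 => M 1 0) sC; rewrite mxE !EC /=.
have s20 : fC 2%N 0%N = fC 0%N 2%N.
  by have := congr1 (fun M : 'M[R]_3 => M 2 0) sC; rewrite mxE !EC /=.
have s21 : fC 2%N 1%N = fC 1%N 2%N.
  by have := congr1 (fun M : 'M[R]_3 => M 2 1) sC; rewrite mxE !EC /=.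
have entry : forall (i j : 'I_4), A7 R i j = (B *m C *m B^T) i j.
  by move=> i j; rewrite E.
apply: (@snt3_scalar R (fC 0%N 0%N) (fC 0%N 1%N) (fC 0%N 2%N) (fC 1%N 1%N)
  (fC 1%N 2%N) (fC 2%N 2%N) (fB 0%N 0%N) (fB 0%N 1%N) (fB 0%N 2%N)
  (fB 1%N 0%N) (fB 1%N 1%N) (fB 1%N 2%N) (fB 2%N 0%N) (fB 2%N 1%N) (fB 2%N 2%N)
  (fB 3%N 0%N) (fB 3%N 1%N) (fB 3%N 2%N)); try (by apply: nfC); try (by apply: nfB).
- suff -> : det3s (fC 0%N 0%N) (fC 0%N 1%N) (fC 0%N 2%N) (fC 1%N 1%N)
     (fC 1%N 2%N) (fC 2%N 2%N) = \det C by [].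
  by rewrite det3 !EC /= s10 s20 s21 /det3s; ring.
- have := entry 0 0; rewrite !(mxE, big_ord_recr, big_ord0) /= !EB !EC /= s10 s20 s21 => H.
  by apply: (eq_via _ H) => //; rewrite /bil; ring.
- have := entry 0 1; rewrite !(mxE, big_ord_recr, big_ord0) /= !EB !EC /= s10 s20 s21 => H.
  by apply: (eq_via _ H) => //; rewrite /bil; ring.
- have := entry 0 2; rewrite !(mxE, big_ord_recr, big_ord0) /= !EB !EC /= s10 s20 s21 => H.
  by apply: (eq_via _ H) => //; rewrite /bil; ring.
- have := entry 0 3; rewrite !(mxE, big_ord_recr, big_ord0) /= !EB !EC /= s10 s20 s21 => H.
  by apply: (eq_via _ H) => //; rewrite /bil; ring.
- have := entry 1 1; rewrite !(mxE, big_ord_recr, big_ord0) /= !EB !EC /= s10 s20 s21 => H.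
  by apply: (eq_via _ H) => //; rewrite /bil; ring.
- have := entry 1 2; rewrite !(mxE, big_ord_recr, big_ord0) /= !EB !EC /= s10 s20 s21 => H.
  by apply: (eq_via _ H) => //; rewrite /bil; ring.
- have := entry 1 3; rewrite !(mxE, big_ord_recr, big_ord0) /= !EB !EC /= s10 s20 s21 => H.
  by apply: (eq_via _ H) => //; rewrite /bil; ring.
- have := entry 2 2; rewrite !(mxE, big_ord_recr, big_ord0) /= !EB !EC /= s10 s20 s21 => H.
  by apply: (eq_via _ H) => //; rewrite /bil; ring.
- have := entry 2 3; rewrite !(mxE, big_ord_recr, big_ord0) /= !EB !EC /= s10 s20 s21 => H.
  by apply: (eq_via _ H) => //; rewrite /bil; ring.
- have := entry 3 3; rewrite !(mxE, big_ord_recr, big_ord0) /= !EB !EC /= s10 s20 s21 => H.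
  by apply: (eq_via _ H) => //; rewrite /bil; ring.
Qed.

Theorem mainTheorem7 (R : realType) :
  \rank (A7 R) = 3%N /\ nn_rank_is (A7 R) 3 /\ snt_rank_is (A7 R) 4.
Proof.
split; first exact: rankA7.
split; split.
- exists (U7 R), (V7 R); split; first by move=> i j; rewrite mxE ler0n.
  split; first by move=> i j; rewrite mxE ler0n.
  exact: A7_UV.
- move=> k hk [U [V [_ [_ EU]]]].
  have : (3 <= k)%N.
    rewrite -(rankA7 R) EU; exact: leq_trans (mxrankM_maxl _ _) (rank_leq_col _).
  by rewrite leqNgt hk.
- exists 1%:M, (A7 R); split; first by move=> i j; rewrite mxE ler0n.
  split; first by move=> i j; rewrite mxE ler0n.
  split; last by rewrite trmx1 mul1mx mulmx1.
  apply/matrixP => i j; rewrite !mxE.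
  by case: i => [[|[|[|[|i]]]] hi] //; case: j => [[|[|[|[|j]]]] hj].
- move=> k hk hf; case: (ltngtP k 3) => hk3.
  + case: hf => [B [C [_ [_ [_ EB]]]]].
    have : (3 <= k)%N.
      rewrite -(rankA7 R) EB.
      exact: leq_trans (mxrankM_maxl _ _) (leq_trans (mxrankM_maxl _ _) (rank_leq_col _)).
    by rewrite leqNgt hk3.
  + by move: hk; rewrite ltnS leqNgt hk3.
  + by move: hf; rewrite hk3; apply: no_snt3.
Qed.
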